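(* Let $A\in\mathbb{R}^{n\times n}$ be nonsingular, $B\in\mathbb{R}^{n\times p}$, $C\in\mathbb{R}^{q\times n}$, and $X_0=O$. For $k=0,1,2,\dots$ suppose $A-X_kBB^T$ is nonsingular, let $\widetilde X_{k+1}=W_{k+1}\widetilde Y^{(k+1)}W_{k+1}^T$ be an approximate solution computed by EKSM of $$(A-X_kBB^T)X+X(A-X_kBB^T)^T=-X_kBB^TX_k-C^TC,$$ where the columns of $W_{k+1}$ form an orthonormal basis of $\mathbf{EK}^\square_{m_{k+1}}(A-X_kBB^T,[C^T,X_kB])$, set $Z_k=\widetilde X_{k+1}-X_k$, and define $X_{k+1}=X_k+\lambda_kZ_k$ for some step size $\lambda_k>0$. Then for every $k\ge0$, $$\mathrm{Range}(X_{k+1})\subseteq\mathbf{EK}^\square_{\bar m_{k+1}}(A,C^T)$$ for some integer $\bar m_{k+1}\le\sum_{j=1}^{k+1}m_j+2$; in particular, whenever $X_{k+1}=P_{k+1}P_{k+1}^T$ is a low-rank factorization, $\mathrm{Range}(P_{k+1})\subseteq \mathbf{EK}^\square_{\bar m_{k+1}}(A,C^T)$.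
   Context: For a nonsingular $M\in\mathbb{R}^{n\times n}$ and $G\in\mathbb{R}^{n\times s}$, the block extended Krylov subspace is $\mathbf{EK}^\square_m(M,G)=\mathrm{Range}([G,M^{-1}G,MG,M^{-2}G,\dots,M^{m-1}G,M^{-m}G])$. ''Solving the Lyapunov equation $MX+XM^T+GG^T=0$ by EKSM'' means computing an approximate solution of the form $VYV^T$, where the columns of $V$ form an orthonormal basis of $\mathbf{EK}^\square_m(M,G)$ for some $m$ and $Y$ is a small square matrix. *)

(* Defs.v *)
From HB Require Import structures.
From mathcomp Require Import all_boot all_order all_algebra.
Set Implicit Arguments. Unset Strict Implicit. Unset Printing Implicit Defensive.
Import Order.TTheory GRing.Theory Num.Theory.
Local Open Scope ring_scope.

(* Column space ("Range") of a matrix M : 'M_(n, s) is represented as the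
   row space of M^T.  The block extended Krylov subspace
   EK_m(M, G) = Range [G, M^-1 G, M G, M^-2 G, ..., M^(m-1) G, M^-m G]
   is represented by a square matrix whose row space is the sum of the row
   spaces of (M^i G)^T, i < m, and (M^-(i+1) G)^T, i < m. *)
Definition EK (R : fieldType) (n s : nat) (M : 'M[R]_n) (G : 'M[R]_(n, s))
    (m : nat) : 'M[R]_n :=
  ((\sum_(i < m) <<(M ^+ i *m G)^T>>) +
   (\sum_(i < m) <<(invmx M ^+ i.+1 *m G)^T>>))%MS.

Definition range_sub (R : fieldType) (n s : nat) (P : 'M[R]_(n, s))
    (S : 'M[R]_n) : bool := (P^T <= S)%MS.

Definition range_eq (R : fieldType) (n s : nat) (P : 'M[R]_(n, s))
    (S : 'M[R]_n) : bool := (P^T == S)%MS.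

Definition orthonormal_cols (R : ringType) (n r : nat) (W : 'M[R]_(n, r)) :
  Prop := W^T *m W = 1%:M.

(* Main.v *)
Require Import Defs.
From HB Require Import structures.
From mathcomp Require Import all_boot all_order all_algebra.
Import Order.TTheory GRing.Theory Num.Theory.
Local Open Scope ring_scope.

Lemma EK1 (R : fieldType) n s (M : 'M[R]_n) (G : 'M[R]_(n, s)) j i :
  (i < j)%N -> ((M ^+ i *m G)^T <= EK M G j)%MS.
Proof.
move=> ij; rewrite /EK; apply: submx_trans (addsmxSl _ _).
by apply: (sumsmx_sup (Ordinal ij)) => //=; rewrite genmxE.
Qed.

Lemma EK2 (R : fieldType) n s (M : 'M[R]_n) (G : 'M[R]_(n, s)) j i :
  (i < j)%N -> ((invmx M ^+ i.+1 *m G)^T <= EK M G j)%MS.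
Proof.
move=> ij; rewrite /EK; apply: submx_trans (addsmxSr _ _).
by apply: (sumsmx_sup (Ordinal ij)) => //=; rewrite genmxE.
Qed.

Lemma EK_mono (R : fieldType) n s (M : 'M[R]_n) (G : 'M[R]_(n, s)) j j' :
  (j <= j')%N -> (EK M G j <= EK M G j')%MS.
Proof.
move=> jj; rewrite {1}/EK addsmx_sub; apply/andP; split;
  apply/sumsmx_subP => i _; rewrite genmxE;
  [apply: EK1 | apply: EK2]; exact: leq_trans (ltn_ord i) jj.
Qed.

Lemma EK_A (R : fieldType) n s (M : 'M[R]_n) (G : 'M[R]_(n, s)) j :
  M \in unitmx -> (EK M G j *m M^T <= EK M G j.+1)%MS.
Proof.
move=> uM; rewrite /EK addsmxMr addsmx_sub !sumsmxMr; apply/andP; split;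
  apply/sumsmx_subP => i _; rewrite (eqmxMr _ (genmxE _)) -trmx_mul mulmxA.
  have -> : M *m M ^+ i = M ^+ i.+1 by rewrite exprS.
  by apply: EK1; rewrite ltnS.
have -> : M *m invmx M ^+ i.+1 = invmx M ^+ i.
  by rewrite exprS [_ * _]/(invmx M *m _) mulmxA mulmxV // mul1mx.
case: i => [[|i] /= Hi]; first by rewrite expr0 -(expr0 M); apply: (@EK1 _ _ _ _ _ _ 0).
exact: (@EK2 _ _ _ M G j.+1 i (ltnW (ltnW Hi))).
Qed.

Lemma EK_Ai (R : fieldType) n s (M : 'M[R]_n) (G : 'M[R]_(n, s)) j :
  M \in unitmx -> (EK M G j *m (invmx M)^T <= EK M G j.+1)%MS.
Proof.
move=> uM; rewrite /EK addsmxMr addsmx_sub !sumsmxMr; apply/andP; split;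
  apply/sumsmx_subP => i _; rewrite (eqmxMr _ (genmxE _)) -trmx_mul mulmxA.
  case: i => [[|i] /= Hi].
    by rewrite expr0 [_ *m 1%:M]mulmx1 -[invmx M]expr1; apply: (@EK2 _ _ _ _ _ _ 0).
  have -> : invmx M *m M ^+ i.+1 = M ^+ i.
    by rewrite exprS [_ * _]/(M *m _) mulmxA mulVmx // mul1mx.
  exact: (@EK1 _ _ _ M G j.+1 i (ltnW (ltnW Hi))).
have -> : invmx M *m invmx M ^+ i.+1 = invmx M ^+ i.+2 by rewrite [in RHS]exprS.
by apply: EK2; rewrite ltnS.
Qed.

Lemma rs_trans (R : fieldType) n s (Z : 'M[R]_(n, s)) (S T : 'M[R]_n) :
  range_sub Z S -> (S <= T)%MS -> range_sub Z T.
Proof. by rewrite /range_sub => H1 H2; apply: submx_trans H1 H2. Qed.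

Lemma rs_mul (R : fieldType) n s t (Z : 'M[R]_(n, s)) (D : 'M[R]_(s, t)) S :
  range_sub Z S -> range_sub (Z *m D) S.
Proof. by rewrite /range_sub trmx_mul => H; apply: submx_trans (submxMl _ _) H. Qed.

Lemma rs_add (R : fieldType) n s (Z Z' : 'M[R]_(n, s)) S :
  range_sub Z S -> range_sub Z' S -> range_sub (Z + Z') S.
Proof. by rewrite /range_sub linearD; apply: addmx_sub. Qed.

Lemma rs_scale (R : fieldType) n s (Z : 'M[R]_(n, s)) S a :
  range_sub Z S -> range_sub (a *: Z) S.
Proof. by rewrite /range_sub linearZ; apply: scalemx_sub. Qed.

Lemma rs_opp (R : fieldType) n s (Z : 'M[R]_(n, s)) S :
  range_sub Z S -> range_sub (- Z) S.
Proof. by move=> H; rewrite -scaleN1r; apply: rs_scale. Qed.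

Lemma rs_sub (R : fieldType) n s (Z Z' : 'M[R]_(n, s)) S :
  range_sub Z S -> range_sub Z' S -> range_sub (Z - Z') S.
Proof. by move=> H H'; apply: rs_add => //; apply: rs_opp. Qed.

Lemma rs_A (R : fieldType) n s t (A : 'M[R]_n) (G : 'M[R]_(n, s)) j (Z : 'M[R]_(n, t)) :
  A \in unitmx -> range_sub Z (EK A G j) -> range_sub (A *m Z) (EK A G j.+1).
Proof.
rewrite /range_sub trmx_mul => uA H; apply: submx_trans _ (@EK_A _ _ _ A G j uA).
exact: submxMr H.
Qed.

Lemma rs_Ai (R : fieldType) n s t (A : 'M[R]_n) (G : 'M[R]_(n, s)) j (Z : 'M[R]_(n, t)) :
  A \in unitmx -> range_sub Z (EK A G j) -> range_sub (invmx A *m Z) (EK A G j.+1).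
Proof.
rewrite /range_sub trmx_mul => uA H; apply: submx_trans _ (@EK_Ai _ _ _ A G j uA).
exact: submxMr H.
Qed.

Lemma rs_mono (R : fieldType) n s t (A : 'M[R]_n) (G : 'M[R]_(n, s)) j j' (Z : 'M[R]_(n, t)) :
  (j <= j')%N -> range_sub Z (EK A G j) -> range_sub Z (EK A G j').
Proof. by move=> jj H; apply: rs_trans H (@EK_mono _ _ _ A G _ _ jj). Qed.


Lemma rs_M (R : fieldType) n s t p (A : 'M[R]_n) (G : 'M[R]_(n, s)) (X : 'M[R]_n)
  (B : 'M[R]_(n, p)) a j (Z : 'M[R]_(n, t)) :
  A \in unitmx -> range_sub X (EK A G a) -> (a <= j)%N ->
  range_sub Z (EK A G j) -> range_sub ((A - X *m B *m B^T) *m Z) (EK A G j.+1).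
Proof.
move=> uA hX aj hZ; rewrite mulmxBl -!mulmxA; apply: rs_sub; first exact: rs_A.
by apply: rs_mul; apply: rs_mono hX; apply: leqW.
Qed.

Lemma rs_Mi (R : fieldType) n s t p (A : 'M[R]_n) (G : 'M[R]_(n, s)) (X : 'M[R]_n)
  (B : 'M[R]_(n, p)) a j (Z : 'M[R]_(n, t)) :
  A \in unitmx -> (A - X *m B *m B^T) \in unitmx -> range_sub X (EK A G a) -> (a <= j)%N ->
  range_sub Z (EK A G j) ->
  range_sub (invmx (A - X *m B *m B^T) *m Z) (EK A G j.+1).
Proof.
move=> uA uM hX aj hZ.
set M := A - X *m B *m B^T; set w := invmx M *m Z.
have hZ' : M *m w = Z by rewrite /w mulmxA mulmxV // mul1mx.
have hA : A *m w = Z + X *m (B *m B^T *m w).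
  by rewrite -{1}hZ' /M mulmxBl !mulmxA subrK.
have -> : w = invmx A *m (Z + X *m (B *m B^T *m w)).
  by rewrite -hA mulmxA mulVmx // mul1mx.
apply: rs_Ai => //; apply: rs_add => //; apply: rs_mul; exact: rs_mono hX.
Qed.
Arguments rs_M {R n s t p A G X B a j Z}.
Arguments rs_Mi {R n s t p A G X B a j Z}.

Lemma EK_pert (R : fieldType) n s t p (A : 'M[R]_n) (G : 'M[R]_(n, s)) (X : 'M[R]_n)
  (B : 'M[R]_(n, p)) a b (H : 'M[R]_(n, t)) mm :
  A \in unitmx -> (A - X *m B *m B^T) \in unitmx -> range_sub X (EK A G a) ->
  (a <= b)%N -> range_sub H (EK A G b) ->
  (EK (A - X *m B *m B^T) H mm <= EK A G (b + mm))%MS.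
Proof.
move=> uA uM hX ab hH; set M := A - X *m B *m B^T.
have P1 : forall i, range_sub (M ^+ i *m H) (EK A G (b + i)).
  elim=> [|i IH]; first by rewrite expr0 mul1mx addn0.
  have -> : M ^+ i.+1 *m H = M *m (M ^+ i *m H) by rewrite mulmxA exprS.
  rewrite addnS; apply: (rs_M uA hX) => //; exact: leq_trans ab (leq_addr _ _).
have P2 : forall i, range_sub (invmx M ^+ i.+1 *m H) (EK A G (b + i.+1)).
  elim=> [|i IH].
    rewrite expr1 addn1; apply: (rs_Mi uA uM hX) => //.
  have -> : invmx M ^+ i.+2 *m H = invmx M *m (invmx M ^+ i.+1 *m H)
    by rewrite mulmxA [in LHS]exprS.
  rewrite addnS; apply: (rs_Mi uA uM hX) => //; exact: leq_trans ab (leq_addr _ _).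
rewrite {1}/EK addsmx_sub; apply/andP; split; apply/sumsmx_subP => i _; rewrite genmxE.
  apply: submx_trans (P1 i) _; apply: EK_mono; rewrite leq_add2l; exact: ltnW.
apply: submx_trans (P2 i) _; apply: EK_mono; rewrite leq_add2l; exact: ltn_ord.
Qed.

Lemma rs_factor (R : realFieldType) n t (P : 'M[R]_(n, t)) (S : 'M[R]_n) :
  range_sub (P *m P^T) S -> range_sub P S.
Proof.
rewrite /range_sub => H; apply: submx_trans H.
set K := (P :&: kermx P^T)%MS.
have h1 : K *m P^T = 0 by apply/sub_kermxP; exact: capmxSr.
have [D hD] : exists D, K = D *m P by apply/submxP; exact: capmxSl.
have h2 : K *m K^T = 0 by rewrite {2}hD trmx_mul mulmxA h1 mul0mx.
have K0 : K = 0.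
  apply/matrixP => i j; rewrite mxE.
  have := congr1 (fun M : 'M_t => M i i) h2; rewrite !mxE => hs.
  have nn : forall k : 'I_t, true -> 0 <= K i k * K^T k i.
    by move=> k _; rewrite mxE -expr2 sqr_ge0.
  have := psumr_eq0P nn hs.
  move=> /(_ j isT) /eqP; rewrite mxE mulf_eq0 orbb => /eqP -> //.
have rk : \rank (P *m P^T) = \rank P^T.
  by have := mxrank_mul_ker P P^T; rewrite -/K K0 mxrank0 addn0 mxrank_tr.
rewrite trmx_mul trmxK.
by rewrite -(mxrank_leqif_sup (submxMl P P^T)).2 rk.
Qed.

Theorem corollary1 (R : realFieldType) (n p q : nat)
  (A : 'M[R]_n) (B : 'M[R]_(n, p)) (C : 'M[R]_(q, n))
  (X : nat -> 'M[R]_n) (lambda : nat -> R)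
  (m r : nat -> nat) (W : forall k, 'M[R]_(n, r k)) (Y : forall k, 'M[R]_(r k)) :
  A \in unitmx ->
  X 0%N = 0 ->
  (forall k, A - X k *m B *m B^T \in unitmx) ->
  (forall k, orthonormal_cols (W k.+1)) ->
  (forall k, range_eq (W k.+1)
     (EK (A - X k *m B *m B^T) (row_mx C^T (X k *m B)) (m k.+1))) ->
  (forall k, 0 < lambda k) ->
  (forall k, X k.+1 =
     X k + lambda k *: (W k.+1 *m Y k.+1 *m (W k.+1)^T - X k)) ->
  forall k : nat, exists mbar : nat,
    (mbar <= \sum_(1 <= j < k.+2) m j + 2)%N /\
    range_sub (X k.+1) (EK A C^T mbar) /\
    (forall (t : nat) (P : 'M[R]_(n, t)),
       X k.+1 = P *m P^T -> range_sub P (EK A C^T mbar)).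
Proof.
move=> uA X0 uM _ hW _ hX.
have step : forall k b, (1 <= b)%N -> range_sub (X k) (EK A C^T b) ->
    range_sub (X k.+1) (EK A C^T (b + m k.+1)).
  move=> k b hb hXk.
  have hG : range_sub (row_mx C^T (X k *m B)) (EK A C^T b).
    rewrite /range_sub tr_row_mx col_mx_sub; apply/andP; split.
      by have := @EK1 _ _ _ A C^T b 0 hb; rewrite expr0 mul1mx trmxK.
    exact: rs_mul.
  have hE := @EK_pert _ _ _ _ _ A C^T (X k) B b b _ (m k.+1) uA (uM k) hXk (leqnn b) hG.
  have hWk : range_sub (W k.+1) (EK A C^T (b + m k.+1)).
    by move: (hW k); rewrite /range_eq /range_sub => /andP [h _]; apply: submx_trans h hE.
  rewrite hX; apply: rs_add.
    by apply: rs_mono hXk; apply: leq_addr.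
  apply: rs_scale; apply: rs_sub; last by apply: rs_mono hXk; apply: leq_addr.
  by rewrite -mulmxA; apply: rs_mul.
have main : forall k, range_sub (X k.+1) (EK A C^T (1 + \sum_(1 <= j < k.+2) m j)).
  elim=> [|k IH].
    rewrite big_nat1; apply: step => //.
    by rewrite /range_sub X0 linear0 sub0mx.
  by rewrite big_nat_recr //= addnA; apply: step => //; rewrite leq_addr.
move=> k; exists (1 + \sum_(1 <= j < k.+2) m j)%N; split; first by rewrite addnC leq_add2l.
split; first exact: main.
by move=> t P hP; apply: rs_factor; rewrite -hP; apply: main.
Qed.
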